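(* Let $q \geq 2$ be an integer. If $w_1 \cdots w_\ell$ is a $q$-Kunz word and $v_i := \min\{q-1, w_i\}$ for each $i$, then $v_1 \cdots v_\ell$ is a $(q-1)$-Kunz word.
   Context: A Kunz word of length $\ell$ is a word $w_1 \cdots w_\ell$ of positive integers satisfying the Kunz conditions: $w_i + w_j \geq w_{i+j}$ for all $i,j \geq 1$ with $i + j \leq \ell$, and $w_i + w_j + 1 \geq w_{i+j-\ell-1}$ for all $i,j \leq \ell$ with $i + j > \ell + 1$. A Kunz word is $q$-Kunz if its maximum entry is at most $q$. *)

(* Defs.v *)
From mathcomp Require Import all_boot.
Set Implicit Arguments. Unset Strict Implicit. Unset Printing Implicit Defensive.

(* A word w_1 ... w_l is represented as a sequence w : seq nat, with
   w_i := nth 0 w (i-1), so letters are 1-indexed as in the paper. *)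
Definition letter (w : seq nat) (i : nat) : nat := nth 0 w i.-1.

Definition kunz_word (w : seq nat) : Prop :=
  let l := size w in
  (forall i, 1 <= i <= l -> 0 < letter w i) /\
  (forall i j, 1 <= i -> 1 <= j -> i + j <= l ->
      letter w (i + j) <= letter w i + letter w j) /\
  (forall i j, 1 <= i <= l -> 1 <= j <= l -> l.+1 < i + j ->
      letter w (i + j - l.+1) <= letter w i + letter w j + 1).

Definition q_kunz_word (q : nat) (w : seq nat) : Prop :=
  kunz_word w /\ (forall i, 1 <= i <= size w -> letter w i <= q).

(* Main.v *)
Require Import Defs.
From mathcomp Require Import all_boot.
From mathcomp Require Import zify.

Lemma letter_min (q : nat) (w : seq nat) i :
  letter [seq minn q x | x <- w] i = minn q (letter w i).
Proof.
rewrite /letter; case: (ltnP i.-1 (size w)) => H.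
  by rewrite (nth_map 0).
by rewrite !nth_default ?size_map // minn0.
Qed.

Theorem lemma3p8 (q : nat) (w : seq nat) :
  2 <= q -> q_kunz_word q w ->
  q_kunz_word q.-1 [seq minn q.-1 x | x <- w].
Proof.
move=> hq [[h1 [h2 h3]] h4]; rewrite /q_kunz_word /kunz_word size_map.
split; [split; [|split]|].
- move=> i hi; rewrite letter_min; have := h1 i hi; lia.
- move=> i j hi hj hl; rewrite !letter_min; have := h2 i j hi hj hl; lia.
- move=> i j hi hj hl; rewrite !letter_min; have := h3 i j hi hj hl; lia.
- move=> i hi; rewrite letter_min; lia.
Qed.
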